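(* Let $q$ be a prime power, $M\geq 2$ an integer, and let $f$ be a SCIM polynomial over $\mathbb{F}_{q^2}$ of odd degree $d$ such that $f(x^M)$ has a SCIM factor $g$ of degree $d$. Let $C_f\in\mathrm{U}(d,\mathbb{F}_{q^2})$ be a matrix with characteristic polynomial $f$. Then there exists $\alpha\in \mathrm{U}(d,\mathbb{F}_{q^2})$ such that $\alpha^M=C_f$.
   Context: For $a\in\mathbb{F}_{q^2}$ write $\bar a=a^q$, extended coefficientwise to matrices and polynomials. Let $\Lambda_n$ be the $n\times n$ matrix with $1$'s on the antidiagonal and $0$ elsewhere; the unitary group is $\mathrm{U}(n,\mathbb{F}_{q^2})=\{A\in \mathrm{GL}(n,\mathbb{F}_{q^2}) : A\Lambda_n\bar A^{t}=\Lambda_n\}$. For a monic polynomial $f$ of degree $d$ with $f(0)\neq 0$ define $\widetilde{f}(t)=\overline{f(0)}^{-1}t^d\bar f(t^{-1})$. A SCIM polynomial is a monic polynomial $f\in\mathbb{F}_{q^2}[t]$ with $f(0)\neq0$, irreducible over $\mathbb{F}_{q^2}$, with $\widetilde f=f$. *)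

(* Defs.v *)
From HB Require Import structures.
From mathcomp Require Import all_boot all_order all_algebra.
Set Implicit Arguments. Unset Strict Implicit. Unset Printing Implicit Defensive.
Import GRing.Theory.
Local Open Scope ring_scope.

(* F plays the role of F_{q^2}; conjugation a |-> a^q. *)
Definition fbar (F : finFieldType) (q : nat) (a : F) : F := a ^+ q.

Definition Lambda (F : finFieldType) (n : nat) : 'M[F]_n :=
  \matrix_(i < n, j < n) (if (i + j == n.-1)%N then 1 else 0).

Definition unitary (F : finFieldType) (q n : nat) (A : 'M[F]_n) : bool :=
  (A \in unitmx) &&
  (A *m Lambda F n *m (map_mx (@fbar F q) A)^T == Lambda F n).

Definition pbar (F : finFieldType) (q : nat) (f : {poly F}) : {poly F} :=
  map_poly (@fbar F q) f.

(* tilde f = conj(f(0))^{-1} t^d conj(f)(t^{-1}), with d = deg f;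
   t^d h(t^{-1}) = sum_{i<=d} h_i t^{d-i} is written out coefficientwise. *)
Definition ptilde (F : finFieldType) (q : nat) (f : {poly F}) : {poly F} :=
  let d := (size f).-1 in
  (fbar q f.[0])^-1 *: \poly_(i < d.+1) (pbar q f)`_(d - i).

Definition SCIM (F : finFieldType) (q : nat) (f : {poly F}) : Prop :=
  [/\ f \is monic, f.[0] != 0, irreducible_poly f & ptilde q f = f].

Definition mxpow (F : finFieldType) (n : nat) (A : 'M[F]_n) (k : nat) : 'M[F]_n :=
  iter k (mulmx A) 1%:M.

Definition prime_power (q : nat) : Prop :=
  exists p k, prime p /\ (0 < k)%N /\ q = (p ^ k)%N.

(* Main.v *)
Require Import Defs.
From HB Require Import structures.
From mathcomp Require Import all_boot all_order all_algebra all_field.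
From mathcomp Require Import ring.
Import GRing.Theory.
Set Implicit Arguments. Unset Strict Implicit. Unset Printing Implicit Defensive.
Open Scope ring_scope.
Definition frobk (F : fieldType) (p k : nat) (H : p \in [pchar F]) (x : F) : F := x ^+ (p ^ k)%N.
Arguments frobk {F p k} H x.
Lemma frobk_nat (F : fieldType) (p k : nat) (H : p \in [pchar F]) : [pchar F].-nat (p ^ k)%N.
Proof. by rewrite pnatX; apply/orP; left; rewrite pnatE; case/andP: (H). Qed.
Lemma frobk_zmod (F : fieldType) (p k : nat) (H : p \in [pchar F]) : zmod_morphism (@frobk F p k H).
Proof. by move=> x y; rewrite /frobk exprDn_pchar ?exprNn_pchar // frobk_nat. Qed.
Lemma frobk_mon (F : fieldType) (p k : nat) (H : p \in [pchar F]) : monoid_morphism (@frobk F p k H).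
Proof. by split; [rewrite /frobk expr1n | move=> x y; rewrite /frobk exprMn]. Qed.
HB.instance Definition _ (F : fieldType) (p k : nat) (H : p \in [pchar F]) := GRing.isZmodMorphism.Build F F (@frobk F p k H) (@frobk_zmod F p k H).
HB.instance Definition _ (F : fieldType) (p k : nat) (H : p \in [pchar F]) := GRing.isMonoidMorphism.Build F F (@frobk F p k H) (@frobk_mon F p k H).


Lemma cong_mul (F : fieldType) (g a b c e : {poly F}) :
  g %| a - b -> g %| c - e -> g %| a * c - b * e.
Proof.
move=> h1 h2; have -> : a * c - b * e = a * (c - e) + (a - b) * e.
  by rewrite mulrBr mulrBl addrA subrK.
by rewrite dvdp_add ?(dvdp_mull _ h2) ?(dvdp_mulr _ h1).
Qed.

Lemma cong_exp (F : fieldType) (g a b : {poly F}) n :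
  g %| a - b -> g %| a ^+ n - b ^+ n.
Proof.
move=> h; elim: n => [|n IH]; first by rewrite !expr0 subrr; apply: dvdp0.
by rewrite !exprS cong_mul.
Qed.

Lemma cong_comp (F : fieldType) (g a b h : {poly F}) :
  g %| a - b -> g %| (h \Po a) - (h \Po b).
Proof.
move=> hab; elim/poly_ind: h => [|h c IH]; first by rewrite !comp_poly0 subrr dvdp0.
rewrite !comp_polyD !comp_polyM !comp_polyX !comp_polyC.
have -> : (h \Po a) * a + c%:P - ((h \Po b) * b + c%:P) = (h \Po a) * a - (h \Po b) * b.
  by rewrite opprD addrACA subrr addr0.
exact: cong_mul.
Qed.

Lemma dvdp_comp2 (F : fieldType) (g a s : {poly F}) :
  g %| a -> g \Po s %| a \Po s.
Proof. by case/dvdpP=> k ->; rewrite comp_polyM dvdp_mull. Qed.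

Lemma dvdp_map2 (F : fieldType) (phi : {rmorphism F -> F}) (g a : {poly F}) :
  g %| a -> map_poly phi g %| map_poly phi a.
Proof. by case/dvdpP=> k ->; rewrite rmorphM dvdp_mull. Qed.

Lemma mod_eq_dvd (F : fieldType) (g a b : {poly F}) :
  a %% g = b %% g -> g %| a - b.
Proof.
move=> e; rewrite [a](divp_eq a g) [b](divp_eq b g) e.
by rewrite opprD addrACA subrr addr0 -mulrBl dvdp_mull.
Qed.

Lemma inj_lemma (F : fieldType) (f g h : {poly F}) M :
  irreducible_poly f -> (1 < size g)%N -> g %| f \Po 'X^M ->
  g %| h \Po 'X^M -> f %| h.
Proof.
move=> irr sg gf gh; apply/negPn/negP => nfh.
have := irreducible_poly_coprime h irr; rewrite (negbTE nfh) /= => /Bezout_coprimepP [[u v]] /=.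
rewrite -size_poly_eq1 => /eqP s1.
have := size1_polyC (eq_leq s1); set w := _ + _ => ew.
have : g %| w \Po 'X^M by rewrite /w comp_polyD !comp_polyM dvdp_add ?dvdp_mull.
have wn0 : (w`_0)%:P != 0 by rewrite -ew -size_poly_eq0 s1.
rewrite ew comp_polyC => /(dvdp_leq wn0); rewrite size_polyC.
by rewrite -polyC_eq0 wn0 leqNgt sg.
Qed.

Lemma mod_coefs_eq (F : fieldType) (g a b : {poly F}) d :
  size g = d.+1 -> (forall i : 'I_d, (a %% g)`_i = (b %% g)`_i) -> a %% g = b %% g.
Proof.
move=> sg e; apply/polyP => i.
have g0 : g != 0 by rewrite -size_poly_eq0 sg.
case: (ltnP i d) => [lt|le]; first exact: (e (Ordinal lt)).
rewrite !nth_default //; apply: leq_trans le; rewrite -ltnS -sg ltn_modp //.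
Qed.

Lemma surj_lemma (F : finFieldType) (f g : {poly F}) M d :
  irreducible_poly f -> (0 < d)%N -> size f = d.+1 -> size g = d.+1 -> g %| f \Po 'X^M ->
  exists p : {poly F}, g %| (p \Po 'X^M) - 'X.
Proof.
move=> irr d0 sf sg gf.
pose P (t : 'rV[F]_d) := rVpoly t.
pose Phi (t : 'rV[F]_d) := \row_(i < d) ((P t \Po 'X^M) %% g)`_i.
have injPhi : injective Phi.
  move=> t1 t2 e.
  have e2 : (P t1 \Po 'X^M) %% g = (P t2 \Po 'X^M) %% g.
    apply: (@mod_coefs_eq _ g (P t1 \Po 'X^M) (P t2 \Po 'X^M) d sg) => i; have := congr1 (fun t : 'rV[F]_d => t 0 i) e.
    by rewrite /Phi !mxE.
  have := mod_eq_dvd e2; rewrite -comp_polyB => /(inj_lemma irr) H.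
  have {H} /H : (1 < size g)%N by rewrite sg.
  move/(_ gf) => fd.
  have e3 : P t1 - P t2 = 0.
    apply/eqP/negPn/negP => nz; have := dvdp_leq nz fd.
    rewrite sf; apply/negP; rewrite -ltnNge.
    apply: leq_ltn_trans (size_polyD _ _) _; rewrite size_polyN gtn_max.
    by rewrite !ltnS /P !size_poly.
  apply/rowP => i; have := congr1 (fun p : {poly F} => p`_i) e3.
  by rewrite coefB /P !coef_rVpoly_ord coef0 => /eqP; rewrite subr_eq0 => /eqP.
have := injF_onto injPhi (\row_(i < d) ('X %% g)`_i).
case/codomP => t et; exists (P t).
apply: mod_eq_dvd; apply: (mod_coefs_eq sg) => i.
by have := congr1 (fun t : 'rV[F]_d => t 0 i) et; rewrite /Phi !mxE.
Qed.

Lemma inv_X (F : fieldType) (h : {poly F}) : h.[0] != 0 -> exists r, h %| r * 'X - 1.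
Proof.
move=> h0; have : coprimep h 'X by rewrite coprimepX /root h0.
case/Bezout_eq1_coprimepP => [[u v]] /= e; exists v.
have -> : v * 'X - 1 = - (u * h) by rewrite -e opprD addrCA subrr addr0.
by rewrite dvdpNr dvdp_mull.
Qed.

Lemma scim_lemma (F : fieldType) (phi : {rmorphism F -> F}) (g s : {poly F}) d :
  size g = d.+1 -> g.[0] != 0 -> g %| s * 'X - 1 ->
  g %| \poly_(i < d.+1) (map_poly phi g)`_(d - i) ->
  g %| map_poly phi g \Po s.
Proof.
move=> sg g0 gs gt.
set gb := map_poly phi g.
have sgb : size gb = d.+1 by rewrite size_map_poly.
have cop : coprimep g ('X^d) by rewrite coprimep_expr // coprimepX /root g0.
rewrite -(Gauss_dvdpr _ cop).
have E : 'X^d * (gb \Po s) - \poly_(i < d.+1) gb`_(d - i)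
   = \sum_(i < d.+1) gb`_(d - i) *: ('X^i * ((s * 'X) ^+ (d - i) - 1)).
  rewrite comp_polyE sgb poly_def mulr_sumr.
  rewrite (reindex_inj rev_ord_inj) /= -sumrB; apply: eq_bigr => i _.
  rewrite subSS -scalerAr -scalerBr; congr (_ *: _).
  have id : (i + (d - i))%N = d by rewrite subnKC // -ltnS ltn_ord.
  rewrite mulrBr mulr1 exprMn -{1}id exprD. by rewrite -mulrA [s ^+ _ * _]mulrC.
have : g %| 'X^d * (gb \Po s) - \poly_(i < d.+1) gb`_(d - i).
  rewrite E; apply: (big_ind (fun x => g %| x)); first exact: dvdp0.
    by move=> x y; apply: dvdp_add.
  move=> i _; rewrite -mul_polyC; apply: dvdp_mull; apply: dvdp_mull.
  by rewrite -(expr1n _ (d - i)); apply: cong_exp.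
move=> H; have := dvdp_add H gt; by rewrite subrK.
Qed.

Lemma comp_expr (F : fieldType) (p q : {poly F}) n : (p ^+ n) \Po q = (p \Po q) ^+ n.
Proof. by elim: n => [|n IH]; rewrite ?expr0 ?comp_polyC // !exprS comp_polyM IH. Qed.

Lemma poly_main (F : finFieldType) (phi : {rmorphism F -> F}) (f g : {poly F}) d M :
  irreducible_poly f -> (0 < d)%N -> f.[0] != 0 -> size f = d.+1 ->
  size g = d.+1 -> g.[0] != 0 ->
  g %| \poly_(i < d.+1) (map_poly phi g)`_(d - i) ->
  g %| f \Po 'X^M ->
  exists p r, [/\ f %| p ^+ M - 'X, f %| r * 'X - 1
                & f %| p * (map_poly phi p \Po r) - 1].
Proof.
move=> irr d0 f0 sf sg g0 gt gf.
have sg1 : (1 < size g)%N by rewrite sg.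
have [p gp] := surj_lemma irr d0 sf sg gf.
have [r fr] := inv_X f0.
have [s gs] := inv_X g0.
exists p, r; split => //.
  apply: (inj_lemma irr sg1 gf).
  rewrite comp_polyB comp_polyX comp_expr.
  exact: cong_exp.
apply: (inj_lemma irr sg1 gf).
set pb := map_poly phi p.
rewrite comp_polyB comp_polyC polyC1 comp_polyM -comp_polyA.
set r' := r \Po 'X^M.
have h1 : g %| r' * 'X^M - 1.
  apply: dvdp_trans gf _.
  by have := dvdp_comp2 ('X^M) fr; rewrite comp_polyB comp_polyM comp_polyX comp_polyC.
have h2 : g %| r' - s ^+ M.
  have -> : r' - s ^+ M = - r' * ((s * 'X) ^+ M - 1) + (r' * 'X^M - 1) * s ^+ M.
    by rewrite exprMn; ring.
  apply: dvdp_add; last by apply: dvdp_mulr.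
  by apply: dvdp_mull; rewrite -(expr1n _ M); apply: cong_exp.
have h3 : g %| (pb \Po r') - (pb \Po s ^+ M) by exact: cong_comp h2.
have h4 : map_poly phi g %| (pb \Po 'X^M) - 'X.
  by have := dvdp_map2 phi gp; rewrite rmorphB /= map_comp_poly map_polyXn map_polyX.
have h5 : g %| (pb \Po s ^+ M) - s.
  have := dvdp_comp2 s h4; rewrite comp_polyB comp_polyX -comp_polyA comp_Xn_poly.
  move=> H; exact: dvdp_trans (scim_lemma sg g0 gs gt) H.
have h6 : g %| (pb \Po r') - s.
  by have := dvdp_add h3 h5; rewrite addrA subrK.
have := dvdp_add (cong_mul gp h6) gs.
by rewrite [s * _]mulrC addrA subrK.
Qed.

Lemma horner_intertwine (F : fieldType) n (A B X : 'M[F]_n.+1) (h : {poly F}) :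
  A * X = X * B -> horner_mx A h * X = X * horner_mx B h.
Proof.
move=> e; elim/poly_ind: h => [|h c IH]; first by rewrite !rmorph0 mul0r mulr0.
rewrite !rmorphD !rmorphM /= !horner_mx_X !horner_mx_C mulrDl mulrDr.
congr (_ + _); last by rewrite -!mulmxE scalar_mxC.
by rewrite -mulrA e mulrA IH mulrA.
Qed.

Lemma horner_tr (F : fieldType) n (A : 'M[F]_n.+1) (h : {poly F}) :
  (horner_mx A h)^T = horner_mx A^T h.
Proof.
elim/poly_ind: h => [|h c IH]; first by rewrite !rmorph0 trmx0.
rewrite !rmorphD !rmorphM /= !horner_mx_X !horner_mx_C linearD /= tr_scalar_mx.
congr (_ + _); rewrite -IH -!mulmxE -trmx_mul.
by have := comm_mx_horner h (erefl (A *m A)); rewrite /comm_mx => ->.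
Qed.

Lemma horner_comp (F : fieldType) n (A : 'M[F]_n.+1) (h r : {poly F}) :
  horner_mx A (h \Po r) = horner_mx (horner_mx A r) h.
Proof.
elim/poly_ind: h => [|h c IH]; first by rewrite comp_poly0 !rmorph0.
rewrite comp_polyD comp_polyM comp_polyX comp_polyC !rmorphD !rmorphM /=.
by rewrite !horner_mx_X !horner_mx_C IH.
Qed.

Lemma horner_dvd (F : fieldType) n (A : 'M[F]_n.+1) (f h : {poly F}) :
  horner_mx A f = 0 -> f %| h -> horner_mx A h = 0.
Proof. by move=> e /dvdpP [k ->]; rewrite rmorphM /= e mulr0. Qed.

Lemma mxpowE (F : finFieldType) n (A : 'M[F]_n.+1) m : mxpow A m = A ^+ m.
Proof. by elim: m => [|m IH] //=; rewrite exprS -IH /mxpow /= mulmxE. Qed.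

Theorem lemma4p2 (F : finFieldType) (q M d : nat) (f g : {poly F})
  (C : 'M[F]_d) :
  prime_power q -> #|F| = (q ^ 2)%N -> (2 <= M)%N ->
  SCIM q f -> odd d -> size f = d.+1 ->
  SCIM q g -> size g = d.+1 -> g %| f \Po 'X^M ->
  unitary q C -> char_poly C = f ->
  exists alpha : 'M[F]_d, unitary q alpha /\ mxpow alpha M = C.
Proof.
move=> [p [k [pp [k0 ->]]]] cardF _ [fmon f0 firr _] oddd sf [gmon g0 girr gt] sg gf uC chC.
case: d oddd sf sg C uC chC gf gt => // n _ sf sg C uC chC gf gt.
have chp : p \in [pchar F] by apply: (card_finPcharP (n := (k * 2)%N)) => //; rewrite cardF expnM.
pose phi := (@frobk F p k chp).
have fbE : fbar (p ^ k)%N =1 phi by [].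
have gt' : g %| \poly_(i < n.+2) (map_poly phi g)`_(n.+1 - i).
  move: gt; rewrite /ptilde sg /= /pbar (eq_map_poly fbE) => e.
  have c0 : fbar (p ^ k) g.[0] != 0 by rewrite fbE fmorph_eq0.
  have -> : \poly_(i < n.+2) (map_poly phi g)`_(n.+1 - i) = (fbar (p ^ k) g.[0]) *: g.
    by rewrite -[X in _ *: X]e scalerA mulfV // scale1r.
  by rewrite -mul_polyC dvdp_mulIr.
have [P [r [fP fr fPr]]] := poly_main firr (ltn0Sn n) f0 sf sg g0 gt' gf.
have m0 : horner_mx C f = 0 by rewrite -chC Cayley_Hamilton.
set alpha := horner_mx C P.
have hX : horner_mx C (P ^+ M) = C.
  have := horner_dvd m0 fP; rewrite rmorphB /= horner_mx_X => /eqP.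
  by rewrite subr_eq0 => /eqP.
set R := horner_mx C r.
have RC : R * C = 1.
  have := horner_dvd m0 fr; rewrite rmorphB rmorphM /= horner_mx_X rmorph1 => /eqP.
  by rewrite subr_eq0 => /eqP.
set Pb := map_poly phi P.
have aB : alpha * horner_mx R Pb = 1.
  have := horner_dvd m0 fPr; rewrite rmorphB rmorphM /= horner_comp rmorph1 => /eqP.
  by rewrite subr_eq0 => /eqP.
exists alpha; split; last by rewrite mxpowE -hX rmorphXn.
case/andP: uC => Cu /eqP CL.
rewrite (eq_map_mx _ fbE) in CL.
set D := (map_mx phi C)^T in CL.
rewrite /unitary; apply/andP; split.
  by case: (mulmx1_unit aB).
apply/eqP; rewrite (eq_map_mx _ fbE) /alpha map_horner_mx horner_tr -/D.
have RL : R * Lambda F n.+1 = Lambda F n.+1 * D.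
  by rewrite -[in LHS]CL !mulmxE !mulrA RC mul1r.
have HI := horner_intertwine Pb RL.
by rewrite !mulmxE -mulrA -HI mulrA aB mul1r.
Qed.
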